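(* Let $g\ge1$, $0\le g'<g$, $g''=g-g'$, and fix Siegel sets $\mathfrak{F}_g(u)\subset\mathfrak{S}_g$, $\mathfrak{F}_{g'}(u)\subset\mathfrak{S}_{g'}$, $\mathfrak{F}^+_{g''}(u)\subset\mathrm{Sym}^+(g'',\mathbb{R})$. Let $(\tau',t)\in\mathfrak{F}_{g'}(u)\times\mathfrak{F}^+_{g''}(u)$ be fixed, and let $V=V_X+iV_Y\in T_\tau\mathfrak{S}_g$ be a vertical tangent vector (i.e. $d\pi_{g'}(V)=0$) at a point $\tau\in\pi_{g'}^{-1}(\tau',t)\cap\mathfrak{F}_g(u)$. Then $$\|V\|_\tau^2=\operatorname{tr}\big(t^{-1}\,{}^tV'''_X(Y')^{-1}V'''_X\big)+\operatorname{tr}\big(t^{-1}\,{}^tV'''_Y(Y')^{-1}V'''_Y\big)+\tfrac12\operatorname{tr}\big(t^{-1}\tilde V''_X\,t^{-1}\tilde V''_X\big),$$ where $\tilde V''_X:=V''_X-{}^tV'''_X(Y')^{-1}Y'''-{}^tY'''(Y')^{-1}V'''_X\in\mathrm{Sym}(g'',\mathbb{R})$.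
   Context: $\mathfrak{S}_g=\{\tau\in\mathrm{Sym}(g,\mathbb{C}):\operatorname{Im}\tau>0\}$, $\tau=X+iY$. The Weil–Petersson norm of $V=V_X+iV_Y\in\mathrm{Sym}(g,\mathbb{C})\cong T_\tau\mathfrak{S}_g$ is $\|V\|_\tau^2=\frac12\big(\operatorname{tr}(Y^{-1}V_XY^{-1}V_X)+\operatorname{tr}(Y^{-1}V_YY^{-1}V_Y)\big)$. Block decompositions: $\tau=\begin{pmatrix}\tau'&\tau'''\\{}^t\tau'''&\tau''\end{pmatrix}$ with $\tau'$ of size $g'\times g'$ and $\tau''$ of size $g''\times g''$; the same for $X,Y,V_X,V_Y$ (blocks $V'_X,V'''_X,V''_X$, etc.). The map $\pi_{g'}:\mathfrak{S}_g\to\mathfrak{S}_{g'}\times\mathrm{Sym}^+(g'',\mathbb{R})$ is $\pi_{g'}(\tau)=(\tau',\,Y''-{}^tY'''(Y')^{-1}Y''')$. Jacobi decomposition $Y=LDL^t$, $L=(l_{ij})$ lower triangular unipotent, $D=\mathrm{diag}(d_1,\dots,d_g)$; Siegel sets $\mathfrak{F}_g(u)=\{X+iY: |x_{ij}|<u,\ |l_{ij}|<u,\ 1<ud_1,\ d_i<ud_{i+1}\}$ and $\mathfrak{F}^+_g(u)=\{Y\in\mathrm{Sym}^+(g,\mathbb{R}): |l_{ij}|<u,\ 1<ud_1,\ d_i<ud_{i+1}\}$. *)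

(* Defs.v *)
From HB Require Import structures.
From mathcomp Require Import all_boot all_order all_algebra.
From mathcomp Require Import all_classical all_reals all_analysis.
Set Implicit Arguments. Unset Strict Implicit. Unset Printing Implicit Defensive.
Import Order.TTheory GRing.Theory Num.Theory.
Import numFieldNormedType.Exports.
Local Open Scope ring_scope.

Definition symmx (R : realType) (n : nat) (A : 'M[R]_n) : Prop := A^T = A.

Definition posdefmx (R : realType) (n : nat) (Y : 'M[R]_n) : Prop :=
  symmx Y /\ forall v : 'rV[R]_n, v != 0 -> 0 < (v *m Y *m v^T) 0 0.

(* A point tau = X + iY of the Siegel upper half space S_n, encoded by the
   pair (X, Y) of real symmetric matrices with Y positive definite. *)
Definition siegel_pt (R : realType) (n : nat) (X Y : 'M[R]_n) : Prop :=
  symmx X /\ posdefmx Y.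

(* Jacobi decomposition Y = L D L^t: L lower triangular unipotent,
   D = diag(d_1,...,d_n) (indices shifted to 0,...,n-1). *)
Definition jacobi_dec (R : realType) (n : nat) (Y L : 'M[R]_n) (d : 'rV[R]_n)
  : Prop :=
  (forall i j : 'I_n, (i < j)%N -> L i j = 0) /\
  (forall i : 'I_n, L i i = 1) /\
  Y = L *m diag_mx d *m L^T.

Definition siegel_Y_cond (R : realType) (n : nat) (u : R) (Y : 'M[R]_n) : Prop :=
  exists (L : 'M[R]_n) (d : 'rV[R]_n),
    jacobi_dec Y L d /\
    (forall i j : 'I_n, (j < i)%N -> `|L i j| < u) /\
    (forall i : 'I_n, val i = 0%N -> 1 < u * d 0 i) /\
    (forall i j : 'I_n, val j = (val i).+1 -> d 0 i < u * d 0 j).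

Definition siegel_set (R : realType) (n : nat) (u : R) (X Y : 'M[R]_n) : Prop :=
  siegel_pt X Y /\ (forall i j : 'I_n, `|X i j| < u) /\ siegel_Y_cond u Y.

Definition siegel_set_pos (R : realType) (n : nat) (u : R) (Y : 'M[R]_n) : Prop :=
  posdefmx Y /\ siegel_Y_cond u Y.

Definition piY (R : realType) (g1 g2 : nat) (Y : 'M[R]_(g1 + g2)) : 'M[R]_g2 :=
  drsubmx Y - (ursubmx Y)^T *m invmx (ulsubmx Y) *m ursubmx Y.

(* d pi_{g'}(V) = 0 at tau = X + iY, for V = VX + i VY: the derivative at s = 0
   of s |-> pi_{g'}(tau + s V) vanishes (componentwise: real and imaginary
   parts of tau', and the Sym^+ component). *)
Definition dpi_zero (R : realType) (g1 g2 : nat) (X Y VX VY : 'M[R]_(g1 + g2))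
  : Prop :=
  let f1 := fun s : R => ulsubmx (X + s *: VX) in
  let f2 := fun s : R => ulsubmx (Y + s *: VY) in
  let f3 := fun s : R => piY (Y + s *: VY) in
  [/\ derivable f1 0 1 /\ 'D_1 f1 0 = 0,
      derivable f2 0 1 /\ 'D_1 f2 0 = 0 &
      derivable f3 0 1 /\ 'D_1 f3 0 = 0].

Definition wp_norm2 (R : realType) (n : nat) (Y VX VY : 'M[R]_n) : R :=
  2^-1 * (\tr (invmx Y *m VX *m invmx Y *m VX) + \tr (invmx Y *m VY *m invmx Y *m VY)).

(* Main.v *)
Require Import Defs.
From HB Require Import structures.
From mathcomp Require Import all_boot all_order all_algebra.
From mathcomp Require Import all_classical all_reals all_analysis.
From mathcomp Require Import ring.
Import Order.TTheory GRing.Theory Num.Theory.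
Import numFieldNormedType.Exports.
Local Open Scope ring_scope.
Section Alg.
Variables (R : realType) (m n : nat) (Y : 'M[R]_(m + n)).
Let Yp := ulsubmx Y.
Let B := ursubmx Y.
Let P := invmx Yp.
Let t := drsubmx Y - B^T *m P *m B.
Let Q := invmx t.
Hypotheses (uYp : Yp \in unitmx) (ut : t \in unitmx) (sY : dlsubmx Y = B^T).

Let Li' : 'M[R]_(m + n) := block_mx 1%:M (- (P *m B)) 0 1%:M.
Let Li : 'M[R]_(m + n) := block_mx 1%:M 0 (- (B^T *m P)) 1%:M.
Let Dgi : 'M[R]_(m + n) := block_mx P 0 0 Q.

Lemma invY : invmx Y = Li' *m Dgi *m Li.
Proof.
have H : Y *m (Li' *m Dgi *m Li) = 1%:M.
  rewrite -{1}(submxK Y) sY /Li' /Dgi /Li !mulmxA !mulmx_block.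
  rewrite ?(mulmx0, mul0mx, mulmx1, mul1mx, addr0, add0r).
  rewrite !mulmxN -/Yp !mulmxA mulmxV // mul1mx -/B addNr !mul0mx ?(addr0, add0r).
  rewrite subr0 [- _ + _]addrC -/t mulmxV // mul1mx addrN.
  by rewrite -scalar_mx_block.
have [uY _] := mulmx1_unit H.
by rewrite -[RHS]mul1mx -(mulVmx uY) -[_ *m _ *m (_ *m _ *m _)]mulmxA H mulmx1.
Qed.

Lemma trV (V : 'M[R]_(m + n)) : ulsubmx V = 0 -> dlsubmx V = (ursubmx V)^T ->
  \tr (invmx Y *m V *m invmx Y *m V) =
  \tr (Q *m (ursubmx V)^T *m P *m ursubmx V)
  + \tr (Q *m (ursubmx V)^T *m P *m ursubmx V)
  + \tr (Q *m (drsubmx V - (ursubmx V)^T *m P *m B - B^T *m P *m ursubmx V)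
          *m Q *m (drsubmx V - (ursubmx V)^T *m P *m B - B^T *m P *m ursubmx V)).
Proof.
move=> V0 Vs.
set C := ursubmx V; set W := drsubmx V - _ - _.
have LVL : Li *m V *m Li' = block_mx 0 C C^T W.
  rewrite -(submxK V) V0 Vs /Li /Li' !mulmx_block.
  rewrite ?(mulmx0, mul0mx, mulmx1, mul1mx, addr0, add0r).
  by rewrite mulmxN mulNmx !mulmxA addrC [- _ + drsubmx V]addrC addrAC.
rewrite invY -!mulmxA mxtrace_mulC !mulmxA.
have -> : Dgi *m Li *m V *m Li' *m Dgi *m Li *m V *m Li' =
   Dgi *m (Li *m V *m Li') *m Dgi *m (Li *m V *m Li') by rewrite !mulmxA.
rewrite LVL /Dgi !mulmx_block.
rewrite ?(mulmx0, mul0mx, mulmx1, mul1mx, addr0, add0r).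
rewrite mxtrace_block mxtraceD addrA; congr (_ + _ + _).
by rewrite -[P *m C *m Q *m C^T]mulmxA mxtrace_mulC !mulmxA.
Qed.
End Alg.
Section Der.
Variables (R : realType) (p q : nat).

Lemma is_derive_scl (f : R -> R) (K : 'M[R]_(p, q)) (x df : R) :
  is_derive x (1:R) f df -> is_derive x (1:R) (fun s => f s *: K) (df *: K).
Proof.
move=> hf.
have d : differentiable f x by apply/derivable1_diffP; exact: ex_derive.
have dZ : differentiable (fun s => f s *: K) x by exact: differentiableZl.
apply: DeriveDef; first exact/derivable1_diffP.
by rewrite deriveE // diffZl //= -deriveE // derive_val.
Qed.

Lemma is_derive_quad (K0 K1 K2 : 'M[R]_(p, q)) :
  is_derive (0:R) 1 (fun s : R => K0 + s *: K1 + (s ^+ 2) *: K2) K1.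
Proof.
have h1 : is_derive (0:R) 1 (fun s : R => s *: K1) (1 *: K1).
  by apply: is_derive_scl; exact: is_derive_id.
have h2 : is_derive (0:R) 1 (fun s : R => (s ^+ 2) *: K2) (0 *: K2).
  apply: is_derive_scl.
  have -> : (GRing.exp (R:=R))^~ 2%N = ((@id R) * (@id R))%R.
    by apply/funext => s /=; rewrite expr2.
  have H := (@is_deriveM R R (@id R) (@id R) 0 1 1 1 (is_derive_id _ _) (is_derive_id _ _)).
  rewrite scale0r addr0 in H; exact H.
have := is_deriveD (is_deriveD (is_derive_cst K0 (0:R) 1) h1) h2.
by rewrite scale1r scale0r add0r addr0.
Qed.
Lemma D_quad (K0 K1 K2 : 'M[R]_(p, q)) :
  'D_1 (fun s : R => K0 + s *: K1 + (s ^+ 2) *: K2) 0 = K1.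
Proof. by have [] := is_derive_quad K0 K1 K2. Qed.
End Der.
Section Sub.
Variables (R : realType) (m n : nat).
Implicit Types (A V : 'M[R]_(m + n)) (s : R).

Lemma ulDZ A V s : ulsubmx (A + s *: V) = ulsubmx A + s *: ulsubmx V.
Proof. by apply/matrixP => i j; rewrite !mxE. Qed.
Lemma urDZ A V s : ursubmx (A + s *: V) = ursubmx A + s *: ursubmx V.
Proof. by apply/matrixP => i j; rewrite !mxE. Qed.
Lemma drDZ A V s : drsubmx (A + s *: V) = drsubmx A + s *: drsubmx V.
Proof. by apply/matrixP => i j; rewrite !mxE. Qed.

Lemma posdef_unit k (A : 'M[R]_k) : posdefmx A -> A \in unitmx.
Proof.
case=> _ pA; rewrite unitmxE unitfE; apply/negP => /det0P [v v0 vA].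
by have := pA v v0; rewrite vA mul0mx mxE ltxx.
Qed.

Lemma sym_dl A : symmx A -> dlsubmx A = (ursubmx A)^T.
Proof. by rewrite /symmx => sA; rewrite trmx_ursub sA. Qed.

Lemma piY_exp Y V s : ulsubmx V = 0 ->
  piY (Y + s *: V) =
  (drsubmx Y - (ursubmx Y)^T *m invmx (ulsubmx Y) *m ursubmx Y)
  + s *: (drsubmx V - (ursubmx V)^T *m invmx (ulsubmx Y) *m ursubmx Y
          - (ursubmx Y)^T *m invmx (ulsubmx Y) *m ursubmx V)
  + (s ^+ 2) *: (- ((ursubmx V)^T *m invmx (ulsubmx Y) *m ursubmx V)).
Proof.
move=> V0; rewrite /piY ulDZ urDZ drDZ V0 scaler0 addr0.
set P := invmx _; set B := ursubmx Y; set C := ursubmx V.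
rewrite !linearD !linearZ /= !mulmxDl -!scalemxAl ?scalerA.
set e := drsubmx V; set f := drsubmx Y.
set a := B^T *m P *m B; set b := C^T *m P *m B; set c := B^T *m P *m C.
set d := C^T *m P *m C.
apply/matrixP => i j; rewrite !mxE; ring.
Qed.
End Sub.

Theorem lemma3p12 (R : realType) (g1 g2 : nat) (u : R)
  (Xp Yp : 'M[R]_g1) (t : 'M[R]_g2)
  (X Y VX VY : 'M[R]_(g1 + g2)) :
  (0 < g2)%N ->
  siegel_set u Xp Yp ->
  siegel_set_pos u t ->
  siegel_set u X Y ->
  ulsubmx X = Xp -> ulsubmx Y = Yp -> piY Y = t ->
  symmx VX -> symmx VY ->
  dpi_zero X Y VX VY ->
  wp_norm2 Y VX VY =
    \tr (invmx t *m (ursubmx VX)^T *m invmx Yp *m ursubmx VX)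
  + \tr (invmx t *m (ursubmx VY)^T *m invmx Yp *m ursubmx VY)
  + 2^-1 * \tr (invmx t
        *m (drsubmx VX - (ursubmx VX)^T *m invmx Yp *m ursubmx Y
            - (ursubmx Y)^T *m invmx Yp *m ursubmx VX)
        *m invmx t
        *m (drsubmx VX - (ursubmx VX)^T *m invmx Yp *m ursubmx Y
            - (ursubmx Y)^T *m invmx Yp *m ursubmx VX)).
Proof.
move=> _ [[_ pYp] _] [pt _] [[_ pY] _] eX eY et sVX sVY.
case=> [[_ h1] [_ h2] [_ h3]].
have VX0 : ulsubmx VX = 0.
  have e : (fun s : R => ulsubmx (X + s *: VX)) =
      (fun s => ulsubmx X + s *: ulsubmx VX + s^+2 *: 0).
    by apply/funext => s; rewrite ulDZ scaler0 addr0.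
  by rewrite e D_quad in h1.
have VY0 : ulsubmx VY = 0.
  have e : (fun s : R => ulsubmx (Y + s *: VY)) =
      (fun s => ulsubmx Y + s *: ulsubmx VY + s^+2 *: 0).
    by apply/funext => s; rewrite ulDZ scaler0 addr0.
  by rewrite e D_quad in h2.
have WY0 := h3.
rewrite (funext (fun s : R => @piY_exp R g1 g2 Y VY s VY0)) in WY0.
rewrite D_quad in WY0.
have uYp : ulsubmx Y \in unitmx by rewrite eY; exact: posdef_unit.
have ut : piY Y \in unitmx by rewrite et; exact: posdef_unit.
have sY : dlsubmx Y = (ursubmx Y)^T by apply: (@sym_dl _ _ _ Y); case: pY.
rewrite /wp_norm2 (@trV _ _ _ Y uYp ut sY VX VX0 (@sym_dl _ _ _ VX sVX)).
rewrite (@trV _ _ _ Y uYp ut sY VY VY0 (@sym_dl _ _ _ VY sVY)) WY0 ?(mulmx0, mul0mx) mxtrace0 addr0.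
rewrite -et -eY /piY.
by field.
Qed.
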